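(* Let $p$ be a strongly productive ultrafilter on a semigroup $S$. If $\mathrm{FP}(\vec{x})\in p$ for some sequence $\vec{x}$ in $S$ satisfying the ordered uniqueness of finite products, then $p$ is sparse (indeed multiplicatively isomorphic to an ordered union ultrafilter).
   Context: For a sequence $\vec{x}=(x_n)_{n\in\omega}$ in $S$, $\mathrm{FP}(\vec{x})$ is the set of products $\prod_{i\in a}x_i$ (increasing order of indices), $a$ a finite nonempty subset of $\omega$; $p$ is strongly productive if every $A\in p$ contains some $\mathrm{FP}(\vec{x})\in p$. $\mathbb{F}$ is the partial semigroup of finite nonempty subsets of $\omega$ with $ab=a\cup b$ defined iff $\max a<\min b$. $\vec{x}$ satisfies the ordered uniqueness of finite products if $f:\mathbb{F}\to\mathrm{FP}(\vec{x})$, $f(a)=\prod_{i\in a}x_i$, is injective and whenever $a,b\in\mathbb{F}$ satisfy $f(a)f(b)\in\mathrm{FP}(\vec{x})$, one has $\max a<\min b$. An ordered union ultrafilter is a strongly productive ultrafilter on the partial semigroup $\mathbb{F}$; $p$ is multiplicatively isomorphic to one if for some $\vec{x}$ the map $f$ above is injective and $\{f^{-1}[A]:A\in p\}$ is an ordered union ultrafilter. $p$ is sparse if for every $A\in p$ there are a sequence $\vec{x}$ in $S$ and a subsequence $\vec{y}=(x_{k_n})_n$ ($k_0<k_1<\cdots$) with $\mathrm{FP}(\vec{y})\in p$, $\mathrm{FP}(\vec{x})\subseteq A$, and $\{k_n:n\in\omega\}$ coinfinite in $\omega$. *)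

(* Defs.v *)
From mathcomp Require Import all_boot.
Set Implicit Arguments. Unset Strict Implicit. Unset Printing Implicit Defensive.

Definition is_ultrafilter (T : Type) (U : (T -> Prop) -> Prop) : Prop :=
  [/\ ~ U (fun _ => False),
      U (fun _ => True),
      (forall A B : T -> Prop, U A -> (forall t, A t -> B t) -> U B),
      (forall A B : T -> Prop, U A -> U B -> U (fun t => A t /\ B t)) &
      (forall A : T -> Prop, U A \/ U (fun t => ~ A t))].

(* The partial semigroup F: finite nonempty subsets of omega, represented as
   strictly increasing nonempty lists (so min a = head, max a = last). *)
Definition isF (a : seq nat) : bool := sorted ltn a && (a != [::]).
Definition Fset := {a : seq nat | isF a}.

Definition Fmin (a : seq nat) : nat := head 0 a.
Definition Fmax (a : seq nat) : nat := last 0 a.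

Definition FPprod (S : Type) (op : S -> S -> S) (x : nat -> S) (a : seq nat) : S :=
  match a with
  | [::] => x 0 (* never used: a is nonempty *)
  | i :: l => foldl (fun acc j => op acc (x j)) (x i) l
  end.

Definition FP (S : Type) (op : S -> S -> S) (x : nat -> S) : S -> Prop :=
  fun s => exists a : Fset, s = FPprod op x (val a).

Definition strongly_productive (S : Type) (op : S -> S -> S)
    (p : (S -> Prop) -> Prop) : Prop :=
  forall A : S -> Prop, p A ->
    exists x : nat -> S, p (FP op x) /\ (forall s, FP op x s -> A s).

Definition ordered_uniqueness (S : Type) (op : S -> S -> S) (x : nat -> S) : Prop :=
  (forall a b : Fset, FPprod op x (val a) = FPprod op x (val b) -> a = b) /\
  (forall a b : Fset, FP op x (op (FPprod op x (val a)) (FPprod op x (val b))) ->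
     Fmax (val a) < Fmin (val b)).

(* FP in the partial semigroup F (product = union, defined iff max a < min b):
   for a sequence y in F whose consecutive products are all defined
   (max y_n < min y_(n+1)), FP(y) is the set of unions of finitely many y_i,
   i.e. concatenations in increasing order. *)
Definition Fblock (y : nat -> Fset) : Prop :=
  forall n, Fmax (val (y n)) < Fmin (val (y n.+1)).

Definition FU (y : nat -> Fset) : Fset -> Prop :=
  fun b => exists a : Fset, val b = flatten [seq val (y i) | i <- val a].

Definition ordered_union_ultrafilter (U : (Fset -> Prop) -> Prop) : Prop :=
  is_ultrafilter U /\
  forall A : Fset -> Prop, U A ->
    exists y : nat -> Fset, Fblock y /\ U (FU y) /\ (forall b, FU y b -> A b).

Definition mult_iso_ordered_union (S : Type) (op : S -> S -> S)
    (p : (S -> Prop) -> Prop) : Prop :=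
  exists x : nat -> S,
    (forall a b : Fset, FPprod op x (val a) = FPprod op x (val b) -> a = b) /\
    ordered_union_ultrafilter
      (fun B : Fset -> Prop =>
         exists A : S -> Prop, p A /\ forall a, B a <-> A (FPprod op x (val a))).

Definition sparse (S : Type) (op : S -> S -> S) (p : (S -> Prop) -> Prop) : Prop :=
  forall A : S -> Prop, p A ->
    exists (x : nat -> S) (k : nat -> nat),
      (forall n, k n < k n.+1) /\
      p (FP op (fun n => x (k n))) /\
      (forall s, FP op x s -> A s) /\
      (forall N, exists m, N <= m /\ forall n, k n <> m).

(* Main.v *)
Require Import Defs.
From mathcomp Require Import all_boot.
From mathcomp Require Import zify.

Lemma foldl_op S (op : S -> S -> S)
  (hA : forall a b c : S, op a (op b c) = op (op a b) c) (x : nat -> S) l s t :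
  foldl (fun acc j => op acc (x j)) (op s t) l
  = op s (foldl (fun acc j => op acc (x j)) t l).
Proof. elim: l t => [|j l IH] t //=. by rewrite -hA IH. Qed.

Lemma FPprod_cat S (op : S -> S -> S)
  (hA : forall a b c : S, op a (op b c) = op (op a b) c) (x : nat -> S) l1 l2 :
  l1 != [::] -> l2 != [::] ->
  FPprod op x (l1 ++ l2) = op (FPprod op x l1) (FPprod op x l2).
Proof.
case: l1 => [|i l1] // _; case: l2 => [|j l2] // _ /=.
rewrite foldl_cat /=. exact: foldl_op.
Qed.

Lemma FPprod_ext S (op : S -> S -> S) (x x' : nat -> S) l :
  (forall n, x n = x' n) -> FPprod op x l = FPprod op x' l.
Proof.
move=> e; case: l => [|i l] /=; first exact: e.
rewrite e; elim: l (x' i) => [|j l IH] s //=; rewrite e; exact: IH.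
Qed.

Lemma FPprod_flatten S (op : S -> S -> S)
  (hA : forall a b c : S, op a (op b c) = op (op a b) c)
  (x w : nat -> S) (a : nat -> seq nat) c :
  (forall n, a n != [::]) -> (forall n, w n = FPprod op x (a n)) -> c != [::] ->
  FPprod op w c = FPprod op x (flatten (map a c)).
Proof.
move=> ha hw; elim: c => [|i c IH] // _.
case: c IH => [|j c] IH; first by rewrite /= cats0 hw.
have h := @FPprod_cat _ _ hA w [:: i] (j :: c) isT isT.
have -> : FPprod op w (i :: j :: c) = op (w i) (FPprod op w (j :: c)) by exact h.
rewrite IH // (_ : flatten (map a (i :: j :: c)) = a i ++ flatten (map a (j :: c))) //.
rewrite (@FPprod_cat _ _ hA x (a i) (flatten (map a (j :: c)))) ?hw //.
rewrite /=; by case: (a j) (ha j).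
Qed.

Lemma path_last_ge u l : path ltn u l -> u <= last u l.
Proof.
elim: l u => //= v l IH u /andP[uv pv].
exact: leq_trans (ltnW uv) (IH _ pv).
Qed.

Lemma Fmin_le_Fmax l : isF l -> Fmin l <= Fmax l.
Proof. case: l => // u l /andP[/= h _]. exact: path_last_ge. Qed.
Arguments Fmin_le_Fmax {l}.

Definition blk (a : nat -> seq nat) :=
  (forall n, isF (a n)) /\ (forall n, Fmax (a n) < Fmin (a n.+1)).

Lemma blk_ne {a} : blk a -> forall n, a n != [::].
Proof. by move=> [h _] n; case/andP: (h n). Qed.

Lemma blk_lt {a} : blk a -> forall {i j}, i < j -> Fmax (a i) < Fmin (a j).
Proof.
move=> [hF hB] i; elim=> // j IH; rewrite ltnS leq_eqVlt => /orP[/eqP-> | lt].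
  exact: hB.
have h1 := IH lt; have h2 := Fmin_le_Fmax (hF j); have h3 := hB j; lia.
Qed.

Lemma blk_le {a} : blk a -> forall {i j}, j <= i -> Fmin (a j) <= Fmax (a i).
Proof.
move=> hb i j; rewrite leq_eqVlt => /orP[/eqP-> | lt].
  exact: Fmin_le_Fmax (hb.1 i).
have h1 := blk_lt hb lt; have h2 := Fmin_le_Fmax (hb.1 j);
have h3 := Fmin_le_Fmax (hb.1 i); lia.
Qed.

Lemma Fmin_cat l1 l2 : l1 != [::] -> Fmin (l1 ++ l2) = Fmin l1.
Proof. by case: l1. Qed.

Lemma last_ne (y z : nat) r : r != [::] -> last y r = last z r.
Proof. by case: r. Qed.

Lemma FL_head {a c} : (forall n, a n != [::]) -> c != [::] ->
  Fmin (flatten (map a c)) = Fmin (a (head 0 c)).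
Proof. move=> ha; case: c => // i c _ /=. exact: Fmin_cat. Qed.

Lemma FL_last {a c} : (forall n, a n != [::]) -> c != [::] ->
  Fmax (flatten (map a c)) = Fmax (a (last 0 c)).
Proof.
move=> ha; elim: c => // i c IH _.
case: c IH => [|j c] IH; first by rewrite /= cats0.
rewrite [flatten _]/= /Fmax last_cat (last_ne _ 0); last by case: (a j) (ha j).
exact: IH.
Qed.

Lemma sorted_cat_lt l1 l2 : isF l1 -> isF l2 -> Fmax l1 < Fmin l2 -> isF (l1 ++ l2).
Proof.
case: l1 => // u l1; case: l2 => // v l2 /andP[/= h1 _] /andP[/= h2 _] /= h3.
by rewrite /isF /= cat_path /= h1 h2 h3.
Qed.

Lemma flatten_isF {a c} : blk a -> isF c -> isF (flatten (map a c)).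
Proof.
move=> hb /andP[]; elim: c => // i c IH /= pc _.
case: c IH pc => [|j c] IH pc; first by rewrite cats0; exact: hb.1.
apply: sorted_cat_lt; first exact: hb.1.
  exact: (IH (path_sorted pc)).
rewrite (FL_head (blk_ne hb)) //=. apply: blk_lt => //. by case/andP: pc.
Qed.

Lemma cat_cancel (l r r' : seq nat) : l ++ r = l ++ r' -> r = r'.
Proof. by elim: l => //= u l IH [] /IH. Qed.

Lemma flatten_inj {a c c'} : blk a -> sorted ltn c -> sorted ltn c' ->
  flatten (map a c) = flatten (map a c') -> c = c'.
Proof.
move=> hb; have ha := blk_ne hb.
elim: c c' => [|i c IH] [|j c'] //=.
- move=> _ _; case: (a j) (ha j) => //.
- move=> _ _; case: (a i) (ha i) => //.
move=> pc pc' E.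
have ej : i = j.
  have := congr1 Fmin E; rewrite !Fmin_cat // => e.
  case: (ltngtP i j) => // lt; exfalso.
    have := blk_lt hb lt; have := Fmin_le_Fmax (hb.1 i); lia.
  have := blk_lt hb lt; have := Fmin_le_Fmax (hb.1 j); lia.
subst j; rewrite (IH c' (path_sorted pc) (path_sorted pc')) //.
exact: cat_cancel E.
Qed.

Fixpoint adjp (u : nat) (l : seq nat) : nat :=
  if l is v :: l' then (u.+1 == v) + adjp v l' else 0.
Definition adj (l : seq nat) := if l is u :: l' then adjp u l' else 0.

Lemma adjp_cat u l1 v l2 :
  adjp u (l1 ++ v :: l2) = adjp u l1 + adjp v l2 + ((last u l1).+1 == v).
Proof. elim: l1 u => [|w l1 IH] u /=; first lia. rewrite IH; lia. Qed.

Lemma adj_cat l1 l2 : l1 != [::] -> l2 != [::] ->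
  adj (l1 ++ l2) = adj l1 + adj l2 + ((Fmax l1).+1 == Fmin l2).
Proof. case: l1 => // u l1 _; case: l2 => // v l2 _ /=. exact: adjp_cat. Qed.

Lemma FP_single {S} (op : S -> S -> S) x n : FP op x (x n).
Proof. by exists (exist _ [:: n] isT). Qed.

Lemma FP_pair {S} (op : S -> S -> S) x {n m} : n < m -> FP op x (op (x n) (x m)).
Proof.
move=> lt. have h : isF [:: n; m] by rewrite /isF /= lt.
by exists (exist _ [:: n; m] h).
Qed.

From Stdlib Require Import ClassicalEpsilon.

Lemma L1 {S} {op : S -> S -> S} {p : (S -> Prop) -> Prop}
  (hp : is_ultrafilter p) (hsp : strongly_productive op p)
  {x : nat -> S} (hx : ordered_uniqueness op x) (hFP : p (FP op x))
  {B : S -> Prop} (hB : p B) :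
  exists (y : nat -> S) (a : nat -> Fset),
    p (FP op y) /\ (forall s, FP op y s -> B s /\ FP op x s) /\
    (forall n, y n = FPprod op x (val (a n))) /\ Fblock a.
Proof.
case: hp => _ _ _ hI _.
have [y [hy sub]] := hsp _ (hI _ _ hB hFP).
have mem1 n : exists a : Fset, y n = FPprod op x (val a).
  exact ((sub _ (FP_single op y n)).2).
pose a n := proj1_sig (constructive_indefinite_description _ (mem1 n)).
have ya n : y n = FPprod op x (val (a n)).
  exact: (proj2_sig (constructive_indefinite_description _ (mem1 n))).
exists y, a; split => //; split => //; split => // n.
apply: hx.2; rewrite -!ya.
exact ((sub _ (FP_pair op y (ltnSn n))).2).
Qed.

Lemma blkF {a : nat -> Fset} : Fblock a -> blk (fun n => val (a n)).
Proof. move=> hb; split => // n; exact: (proj2_sig (a n)). Qed.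

Definition FLF {a : nat -> Fset} (hb : Fblock a) (c : Fset) : Fset :=
  exist _ (flatten (map (fun n => val (a n)) (val c)))
    (flatten_isF (blkF hb) (proj2_sig c)).

Lemma prod_y {S} {op : S -> S -> S}
  (hA : forall a b c : S, op a (op b c) = op (op a b) c)
  {x y : nat -> S} {a : nat -> Fset} (hb : Fblock a)
  (ya : forall n, y n = FPprod op x (val (a n))) (c : Fset) :
  FPprod op y (val c) = FPprod op x (val (FLF hb c)).
Proof.
apply: FPprod_flatten => //; first exact: blk_ne (blkF hb).
by case/andP: (proj2_sig c).
Qed.

Lemma L2 {S} {op : S -> S -> S}
  (hA : forall a b c : S, op a (op b c) = op (op a b) c)
  {x : nat -> S} (hx : ordered_uniqueness op x)
  {y : nat -> S} {a : nat -> Fset} (hb : Fblock a)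
  (ya : forall n, y n = FPprod op x (val (a n)))
  (hsub : forall s, FP op y s -> FP op x s) : ordered_uniqueness op y.
Proof.
have bl := blkF hb.
split.
  move=> c c' E; rewrite !(prod_y hA hb ya) in E.
  have /(congr1 val) /= E' := hx.1 _ _ E.
  apply: val_inj; apply: (flatten_inj bl _ _ E').
    by case/andP: (proj2_sig c).
  by case/andP: (proj2_sig c').
move=> c c' H; rewrite !(prod_y hA hb ya) in H.
have := hx.2 _ _ (hsub _ H); rewrite /= (FL_last (blk_ne bl)); last by case/andP: (proj2_sig c).
rewrite (FL_head (blk_ne bl)); last by case/andP: (proj2_sig c').
rewrite /Fmax /Fmin => h.
rewrite ltnNge; apply/negP => le.
have := blk_le bl le. rewrite /Fmax /Fmin. lia.
Qed.

Lemma sparse_part S (op : S -> S -> S)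
    (op_assoc : forall a b c : S, op a (op b c) = op (op a b) c)
    (p : (S -> Prop) -> Prop)
    (hp : is_ultrafilter p) (hsp : strongly_productive op p)
    (x : nat -> S) (hx : ordered_uniqueness op x) (hFP : p (FP op x)) :
  sparse op p.
Proof.
move=> A hA.
have [y [a [hy [suby [ya hba]]]]] := L1 hp hsp hx hFP hA.
have ouy := L2 op_assoc hx hba ya (fun s h => (suby s h).2).
pose Col := fun s => forall c : Fset, s = FPprod op y (val c) -> ~~ odd (adj (val c)).
have hp' := hp; case: hp' => _ _ hU hI hC.
have gap : exists (z : nat -> S) (b : nat -> Fset), p (FP op z) /\
    (forall n, z n = FPprod op y (val (b n))) /\ Fblock b /\
    (forall n, (Fmax (val (b n))).+1 < Fmin (val (b n.+1))).
  case: (hC Col) => hcol.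
    have [z [b [hz [subz [zb hbb]]]]] := L1 hp hsp ouy hy hcol.
    exists z, b; split => //; split => //; split => // n.
    have e1 : ~~ odd (adj (val (b n))) := (subz _ (FP_single op z n)).1 (b n) (zb n).
    have e1' : ~~ odd (adj (val (b n.+1))) :=
      (subz _ (FP_single op z n.+1)).1 (b n.+1) (zb n.+1).
    have hF : isF (val (b n) ++ val (b n.+1)).
      by apply: sorted_cat_lt; [exact: proj2_sig (b n)|exact: proj2_sig (b n.+1)|exact: hbb].
    have ne1 : val (b n) != [::] by case/andP: (proj2_sig (b n)).
    have ne2 : val (b n.+1) != [::] by case/andP: (proj2_sig (b n.+1)).
    have e2 := (subz _ (FP_pair op z (ltnSn n))).1 (exist (fun l => isF l) _ hF).
    rewrite /= FPprod_cat // -!zb in e2; have {}e2 := e2 erefl.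
    rewrite adj_cat // !oddD (negbTE e1) (negbTE e1') /= oddb in e2.
    have := hbb n; move: e2; case: eqP => //= ne _ lt; lia.
  exfalso.
  have [z [b [hz [subz [zb hbb]]]]] := L1 hp hsp ouy hy hcol.
  have oddrep : forall d : Fset, FP op z (FPprod op y (val d)) -> odd (adj (val d)).
    move=> d hd; case E: (odd (adj (val d))) => //; exfalso.
    apply: (subz _ hd).1 => c hc.
    by rewrite -(ouy.1 _ _ hc) E.
  have bl := blkF hbb.
  have lt02 : Fmax (val (b 0)) < Fmin (val (b 2)) := blk_lt bl (isT : 0 < 2).
  have hF : isF (val (b 0) ++ val (b 2)).
    by apply: sorted_cat_lt; [exact: proj2_sig (b 0)|exact: proj2_sig (b 2)|].
  have ne1 : val (b 0) != [::] by case/andP: (proj2_sig (b 0)).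
  have ne2 : val (b 2) != [::] by case/andP: (proj2_sig (b 2)).
  have o0 := oddrep (b 0); rewrite -zb in o0; have {}o0 := o0 (FP_single op z 0).
  have o2 := oddrep (b 2); rewrite -zb in o2; have {}o2 := o2 (FP_single op z 2).
  have o02 := oddrep (exist (fun l => isF l) _ hF).
  rewrite /= FPprod_cat // -!zb in o02; have {}o02 := o02 (FP_pair op z (isT : 0 < 2)).
  rewrite adj_cat // !oddD o0 o2 /= oddb in o02.
  have h01 := hbb 0; have h12 := hbb 1.
  have m1 := @Fmin_le_Fmax _ (proj2_sig (b 1)).
  move: o02; case: eqP => //= ne _; move: h01 h12 m1 ne; rewrite /=; lia.
have [z [b [hz [zb [hbb hgap]]]]] := gap.
pose bl n : seq nat :=
  if odd n then [:: (Fmax (val (b n./2))).+1] else val (b n./2).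
have bl_even m : bl m.*2 = val (b m) by rewrite /bl odd_double doubleK.
have bl_odd m : bl (m.*2).+1 = [:: (Fmax (val (b m))).+1].
  by rewrite /bl /= odd_double /= uphalf_double.
have blb : blk bl.
  split.
    move=> n; rewrite /bl; case: (odd n) => //; exact: proj2_sig (b _).
  move=> n; rewrite -[n](odd_double_half n); case: (odd n); rewrite ?add0n ?add1n.
    rewrite bl_odd -doubleS bl_even /=; exact: hgap.
  rewrite bl_even bl_odd /=; lia.
pose x' n := FPprod op y (bl n).
exists x', (fun n => n.*2); split; first by move=> n; rewrite doubleS; lia.
split.
  apply: (hU _ _ hz) => s [c hc]; exists c; rewrite hc; apply: FPprod_ext => n.
  by rewrite /x' bl_even zb.
split.
  move=> s [c hc]; apply: (suby _ _).1.
  have hF : isF (flatten (map bl (val c))) := flatten_isF blb (proj2_sig c).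
  exists (exist (fun l => isF l) _ hF); rewrite hc /=.
  apply: FPprod_flatten => //; first exact: blk_ne blb.
  by case/andP: (proj2_sig c).
move=> N; exists (N.*2).+1; split; first by rewrite -addnn; lia.
move=> n /(congr1 odd); by rewrite /= !odd_double.
Qed.

Lemma iso_part S (op : S -> S -> S)
    (op_assoc : forall a b c : S, op a (op b c) = op (op a b) c)
    (p : (S -> Prop) -> Prop)
    (hp : is_ultrafilter p) (hsp : strongly_productive op p)
    (x : nat -> S) (hx : ordered_uniqueness op x) (hFP : p (FP op x)) :
  mult_iso_ordered_union op p.
Proof.
have hp' := hp; case: hp' => h0 hT hU hI hC.
have inj := hx.1.
pose AB (B : Fset -> Prop) := fun s => exists a : Fset, s = FPprod op x (val a) /\ B a.
have ABiff B a : AB B (FPprod op x (val a)) <-> B a.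
  split; last by move=> Ba; exists a.
  by move=> [a' [/inj -> Ba']].
have Qchar : forall (B : Fset -> Prop) A, p A ->
    (forall a, B a <-> A (FPprod op x (val a))) -> p (AB B).
  move=> B A hA hBA; apply: (hU _ _ (hI _ _ hA hFP)) => s [As [a hs]].
  by exists a; split => //; apply/hBA; rewrite -hs.
exists x; split => //; split.
  split.
  - move=> [A [hA hBA]]; apply: h0; apply: (hU _ _ (hI _ _ hA hFP)) => s [As [a hs]].
    by apply/(hBA a); rewrite -hs.
  - by exists (fun _ => True).
  - move=> B B' [A [hA hBA]] sub; exists (AB B'); split.
      apply: (hU _ _ (hI _ _ hA hFP)) => s [As [a hs]].
      by exists a; split => //; apply/sub/hBA; rewrite -hs.
    by move=> a; rewrite ABiff.
  - move=> B B' [A [hA hBA]] [A' [hA' hBA']]; exists (fun t => A t /\ A' t); split.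
      exact: hI.
    by move=> a; rewrite hBA hBA'.
  - move=> B; case: (hC (AB B)) => h.
      by left; exists (AB B); split => // a; rewrite ABiff.
    right; exists (fun t => ~ AB B t); split => // a.
    by rewrite ABiff.
move=> B [A [hA hBA]].
have [y [a [hy [suby [ya hba]]]]] := L1 hp hsp hx hFP hA.
have FUiff b : FU a b <-> FP op y (FPprod op x (val b)).
  split.
    move=> [c hc]; exists c; rewrite (prod_y op_assoc hba ya) /= hc //.
  move=> [c hc]; rewrite (prod_y op_assoc hba ya) in hc.
  by exists c; rewrite (inj _ _ hc).
exists a; split => //; split.
  by exists (FP op y); split.
move=> b /FUiff /suby [] /hBA //.
Qed.

Theorem mainTheorem16 (S : Type) (op : S -> S -> S)
    (op_assoc : forall a b c : S, op a (op b c) = op (op a b) c)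
    (p : (S -> Prop) -> Prop)
    (hp : is_ultrafilter p) (hsp : strongly_productive op p)
    (x : nat -> S) (hx : ordered_uniqueness op x) (hFP : p (FP op x)) :
  sparse op p /\ mult_iso_ordered_union op p.
Proof.
split; [exact: sparse_part hFP | exact: iso_part hFP].
Qed.
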